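(* Let $G$ be the weighted unit-disk graph of a finite set $S\subset\mathbb{R}^2$, let $s,a\in S$ with $a$ reachable from $s$, let $\pi_G(s,a)$ be a shortest path from $s$ to $a$ in $G$, let $l_a$ be its number of edges, and let $\varepsilon>0$. Define $\tau_a=d_G(s,a)+(l_a-1)\cdot(\varepsilon/2)$. Then $\tau_a\le(1+\varepsilon)\,d_G(s,a)$.
   Context: The weighted unit-disk graph of $S$ has vertex set $S$, an edge between $a,b$ iff $\lVert a-b\rVert\le 1$ (Euclidean norm), with weight $\lVert a-b\rVert$; $d_G(s,a)$ is the shortest-path distance. *)

(* Defs.v *)
From Stdlib Require Import Reals Lra List.
Open Scope R_scope.

Definition pt : Type := (R * R)%type.

Definition edist (p q : pt) : R :=
  sqrt ((fst p - fst q) ^ 2 + (snd p - snd q) ^ 2).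

(* The finite set S is given as a list of points.
   [is_walk S x l]: starting at x, the successive vertices l form a walk in the
   unit-disk graph of S: every vertex lies in S and consecutive vertices are
   distinct (no self-loops) and at Euclidean distance <= 1. *)
Fixpoint is_walk (S : list pt) (x : pt) (l : list pt) : Prop :=
  match l with
  | nil => True
  | y :: l' => In y S /\ x <> y /\ edist x y <= 1 /\ is_walk S y l'
  end.

Fixpoint wlen (x : pt) (l : list pt) : R :=
  match l with
  | nil => 0
  | y :: l' => edist x y + wlen y l'
  end.

(* the walk s :: l is a path in G from s to a; it has [length l] edges *)
Definition is_path (S : list pt) (s a : pt) (l : list pt) : Prop :=
  In s S /\ is_walk S s l /\ last l s = a.

Definition reachable (S : list pt) (s a : pt) : Prop :=
  exists l, is_path S s a l.

Definition is_dG (S : list pt) (s a : pt) (d : R) : Prop :=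
  (exists l, is_path S s a l /\ wlen s l = d) /\
  (forall l, is_path S s a l -> d <= wlen s l).

Definition shortest_path (S : list pt) (s a : pt) (l : list pt) : Prop :=
  is_path S s a l /\ (forall l', is_path S s a l' -> wlen s l <= wlen s l').

Definition min_hop_shortest_path (S : list pt) (s a : pt) (l : list pt) : Prop :=
  shortest_path S s a l /\
  (forall l', shortest_path S s a l' -> (length l <= length l')%nat).

(* Main.v *)
Require Import Defs.
From Stdlib Require Import Reals List.
From Stdlib Require Import Lra Psatz Classical.
Open Scope R_scope.

Lemma edist_nonneg p q : 0 <= edist p q.
Proof. unfold edist; apply sqrt_pos. Qed.

Lemma mink a b c e : sqrt ((a+c)^2 + (b+e)^2) <= sqrt (a^2+b^2) + sqrt (c^2+e^2).
Proof.
  assert (H1 := sqrt_pos (a^2+b^2)). assert (H2 := sqrt_pos (c^2+e^2)).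
  assert (Hp1 : 0 <= a^2+b^2) by nra. assert (Hp2 : 0 <= c^2+e^2) by nra.
  assert (HC : a*c+b*e <= sqrt (a^2+b^2) * sqrt (c^2+e^2)).
  { rewrite <- sqrt_mult by lra.
    destruct (Rle_lt_dec (a*c+b*e) 0).
    - assert (0 <= sqrt ((a ^ 2 + b ^ 2) * (c ^ 2 + e ^ 2))) by apply sqrt_pos. lra.
    - rewrite <- (sqrt_pow2 (a*c+b*e)) by lra. apply sqrt_le_1_alt. assert (0 <= (a*e-b*c)^2) by (apply pow2_ge_0). nra. }
  apply Rsqr_incr_0_var; [|lra].
  unfold Rsqr. rewrite (sqrt_sqrt ((a+c)^2+(b+e)^2)) by (apply Rplus_le_le_0_compat; apply pow2_ge_0).
  assert (sqrt (a^2+b^2) * sqrt (a^2+b^2) = a^2+b^2) by (apply sqrt_sqrt; lra).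
  assert (sqrt (c^2+e^2) * sqrt (c^2+e^2) = c^2+e^2) by (apply sqrt_sqrt; lra).
  nra.
Qed.

Lemma edist_tri x y z : edist x z <= edist x y + edist y z.
Proof.
  unfold edist.
  replace (fst x - fst z) with ((fst x - fst y) + (fst y - fst z)) by ring.
  replace (snd x - snd z) with ((snd x - snd y) + (snd y - snd z)) by ring.
  apply mink.
Qed.

Lemma last_cons' (y : pt) q d : last (y :: q) d = last q y.
Proof.
  revert y d; induction q as [|u q IH]; intros y d; [reflexivity|].
  change (last (u :: q) d = last (u :: q) y). rewrite (IH u d), (IH u y). reflexivity.
Qed.

Lemma walk_app S x p q : is_walk S x (p ++ q) <-> is_walk S x p /\ is_walk S (last p x) q.
Proof.
  revert x; induction p as [|y p IH]; intro x.
  - simpl. tauto.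
  - rewrite <- app_comm_cons, last_cons'. cbn [is_walk]. rewrite IH. tauto.
Qed.

Lemma wlen_app x p q : wlen x (p ++ q) = wlen x p + wlen (last p x) q.
Proof.
  revert x; induction p as [|y p IH]; intro x.
  - simpl. ring.
  - rewrite <- app_comm_cons, last_cons'. cbn [wlen]. rewrite IH. ring.
Qed.

Lemma last_app' (p q : list pt) x : last (p ++ q) x = last q (last p x).
Proof.
  revert x; induction p as [|y p IH]; intro x; [reflexivity|].
  rewrite <- app_comm_cons, !last_cons'. apply IH.
Qed.


Definition noshort (x : pt) (l : list pt) : Prop :=
  forall p y z q, l = p ++ y :: z :: q -> 1 < edist (last p x) z.

Lemma wlen_nonneg x l : 0 <= wlen x l.
Proof.
  revert x; induction l; intro x; simpl; [lra|].
  specialize (IHl a); pose proof (edist_nonneg x a); lra.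
Qed.

Lemma bound n : forall x l, (length l <= n)%nat -> noshort x l ->
  INR (length l) - 1 <= 2 * wlen x l.
Proof.
  induction n as [|n IH]; intros x l Hn Hns;
  [destruct l; [simpl; pose proof (wlen_nonneg x nil); simpl in *; lra | simpl in Hn; lia]|].
  destruct l as [|y [|z q]].
  - simpl. pose proof (wlen_nonneg x nil). simpl in *. lra.
  - simpl. pose proof (edist_nonneg x y). lra.
  - assert (H1 := Hns nil y z q eq_refl). simpl in H1.
    assert (Ht := edist_tri x y z).
    assert (Hq : noshort z q).
    { intros p y' z' q' E. subst q.
      specialize (Hns (y :: z :: p) y' z' q' eq_refl).
      rewrite !last_cons' in Hns. exact Hns. }
    simpl in Hn.
    assert (IHq := IH z q ltac:(lia) Hq).
    replace (length (y :: z :: q)) with (S (S (length q))) by reflexivity.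
    rewrite !S_INR. simpl. lra.
Qed.

Lemma minhop_noshort S s a l : min_hop_shortest_path S s a l -> noshort s l.
Proof.
  intros [[[Hs [Hw Hl]] Hmin] Hlen] p y z q E.
  destruct (Rle_lt_dec (edist (last p s) z) 1) as [Hle|]; [exfalso|assumption].
  subst l. set (x' := last p s) in *.
  apply walk_app in Hw. destruct Hw as [Hwp Hwq]. fold x' in Hwq.
  simpl in Hwq. destruct Hwq as (Hy & Hxy & Hexy & Hz & Hyz & Heyz & Hwz).
  rewrite last_app' in Hl. fold x' in Hl. rewrite !last_cons' in Hl.
  pose proof (edist_nonneg x' y). pose proof (edist_nonneg y z).
  pose proof (edist_tri x' y z).
  rewrite wlen_app in Hmin. fold x' in Hmin. simpl in Hmin.
  destruct (classic (x' = z)) as [Heq|Hne].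
  - assert (Hsp : shortest_path S s a (p ++ q)).
    { split.
      - split; [exact Hs|split].
        + apply walk_app. split; auto. fold x'. rewrite Heq. exact Hwz.
        + rewrite last_app'. fold x'. rewrite Heq. exact Hl.
      - intros l' Hl'. specialize (Hmin l' Hl'). rewrite wlen_app. fold x'.
        rewrite Heq. lra. }
    specialize (Hlen _ Hsp). rewrite !length_app in Hlen. simpl in Hlen. lia.
  - assert (Hsp : shortest_path S s a (p ++ z :: q)).
    { split.
      - split; [exact Hs|split].
        + apply walk_app. split; auto. fold x'. simpl. tauto.
        + rewrite last_app'. fold x'. rewrite last_cons'. exact Hl.
      - intros l' Hl'. specialize (Hmin l' Hl'). rewrite wlen_app. fold x'.
        simpl. lra. }
    specialize (Hlen _ Hsp). rewrite !length_app in Hlen. simpl in Hlen. lia.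
Qed.

Theorem fact4 (S : list pt) (s a : pt) (l : list pt) (d eps : R) :
  In s S -> In a S -> reachable S s a ->
  is_dG S s a d ->
  min_hop_shortest_path S s a l ->
  0 < eps ->
  d + (INR (length l) - 1) * (eps / 2) <= (1 + eps) * d.
Proof.
  intros _ _ _ [[l0 [Hp0 Hw0]] Hd] Hmh He.
  assert (Hns := minhop_noshort _ _ _ _ Hmh).
  assert (Hb := bound (length l) s l (le_n _) Hns).
  destruct Hmh as [[Hp Hmin] _].
  assert (Hdl : d = wlen s l).
  { specialize (Hd l Hp). specialize (Hmin l0 Hp0). lra. }
  rewrite Hdl. nra.
Qed.
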